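(* Let $\mathbf{P}_m,\mathbf{P}_M$ be probability measures on a measurable space $\mathcal{Y}$, let $r:\mathcal{Y}\to\mathbb{R}$ be measurable and integrable under both $\mathbf{P}_m$ and $\mathbf{P}_M$, and let $\omega:\mathbb{R}\to[0,1]$ be measurable and non-decreasing; set $\omega_r(y)=\omega(r(y))$, $\nu=1-\mathbf{E}_{\mathbf{P}_m}[\omega_r]$, and $\mathbf{P}_{\mathrm{RSD}}=\omega_r\mathbf{P}_m+\nu\mathbf{P}_M$ (the probability measure $B\mapsto\int_B\omega_r\,d\mathbf{P}_m+\nu\mathbf{P}_M(B)$). If $\mathbf{E}_{\mathbf{P}_M}[r]\ge\mathbf{E}_{\mathbf{P}_m}[r]$, then $$\mathbf{E}_{y\sim\mathbf{P}_{\mathrm{RSD}}}[r(y)]\ \ge\ \mathbf{E}_{y\sim\mathbf{P}_m}[r(y)].$$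
   Context: $\mathbf{P}_m$ and $\mathbf{P}_M$ represent the next-step distributions of a draft model and a target model given a fixed context, $r$ is a reward function on steps, and $\mathbf{P}_{\mathrm{RSD}}$ is the mixture distribution produced by accepting a draft step $y$ with probability $\omega(r(y))$ and otherwise sampling from the target model. *)

(* Defs.v *)
From HB Require Import structures.
From mathcomp Require Import all_boot all_order all_algebra.
From mathcomp Require Import all_classical all_reals all_analysis.
Set Implicit Arguments. Unset Strict Implicit. Unset Printing Implicit Defensive.
Import Order.TTheory GRing.Theory Num.Theory.

(* Main.v *)
Require Import Defs.
From HB Require Import structures.
From mathcomp Require Import all_boot all_order all_algebra.
From mathcomp Require Import all_classical all_reals all_analysis measurable_realfun.
From mathcomp Require Import lra.
Import Order.TTheory GRing.Theory Num.Theory.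
Local Open Scope classical_set_scope.
Local Open Scope ring_scope.
Local Open Scope ereal_scope.

Section dens.
Context d (T : measurableType d) (R : realType) (mu : probability T R) (g : T -> R).
Hypothesis mg : measurable_fun setT g.
Hypothesis g01 : forall x, (0 <= g x <= 1)%R.

Definition densm (mg' : measurable_fun setT g) (g01' : forall x, (0 <= g x <= 1)%R)
  (A : set T) : \bar R := \int[mu]_(x in A) (g x)%:E.
Local Notation densmQ := (densm mg g01).

Let g0 x : 0 <= (g x)%:E. Proof. by rewrite lee_fin; case/andP: (g01 x). Qed.
Let mgE : measurable_fun setT (EFin \o g).
Proof. exact/measurable_EFinP. Qed.

Let densm0 : densmQ set0 = 0. Proof. by rewrite /densm integral_set0. Qed.
Let densm_ge0 A : 0 <= densmQ A. Proof. by apply: integral_ge0 => x _. Qed.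
Let densm_sigma : semi_sigma_additive densmQ.
Proof. exact: semi_sigma_additive_nng_induced. Qed.

HB.instance Definition _ := isMeasure.Build _ _ _ densmQ densm0 densm_ge0 densm_sigma.

Lemma densm_le1 A : measurable A -> densmQ A <= 1.
Proof.
move=> mA; apply: (@le_trans _ _ (\int[mu]_(x in A) (cst 1) x)).
  apply: ge0_le_integral => //.
  - exact: measurable_funTS.
  - by move=> x _; rewrite lee_fin; case/andP: (g01 x).
rewrite integral_cst// mul1e; exact: probability_le1.
Qed.

Let densm_fin : fin_num_fun densmQ.
Proof.
move=> A mA; rewrite ge0_fin_numE//.
have := densm_le1 A mA; move/le_lt_trans; apply; exact: ltry.
Qed.

HB.instance Definition _ := Measure_isFinite.Build _ _ _ densmQ densm_fin.

Lemma densm_dom : densmQ `<< mu.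
Proof.
move=> N HN B mB BN; rewrite /densmQ /densm; apply: null_set_integral => //.
- exact: measurable_funTS.
- exact: HN.
Qed.

Lemma densm_change f : (forall x, 0 <= f x) -> measurable_fun setT f ->
  \int[densmQ]_x f x = \int[mu]_x (f x * (g x)%:E).
Proof.
move=> f0 mf.
rewrite -(Radon_Nikodym_SigmaFinite.change_of_variables densm_dom) //.
apply: ae_eq_integral => //.
- apply: emeasurable_funM => //.
  exact: measurable_int (Radon_Nikodym_SigmaFinite.f_integrable densm_dom).
- by apply: emeasurable_funM.
apply: ae_eqe_mul2l; apply: integral_ae_eq => //.
- exact: (Radon_Nikodym_SigmaFinite.f_integrable densm_dom).
- by move=> E _ mE; rewrite -(Radon_Nikodym_SigmaFinite.f_integral densm_dom).
Qed.
End dens.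

Lemma fin_eq (R : realType) (x : \bar R) : x \is a fin_num -> x = (fine x)%:E.
Proof. by move=> h; rewrite fineK. Qed.

Lemma key_ineq (R : realType) (d : measure_display) (Y : measurableType d)
  (Pm : probability Y R) (r : Y -> R) (omega : R -> R)
  (mr : measurable_fun setT r)
  (ir_m : Pm.-integrable setT (fun y => (r y)%:E))
  (momega : measurable_fun setT omega)
  (omega01 : forall x, (0 <= omega x <= 1)%R)
  (omega_mono : {homo omega : x y / (x <= y)%R}) :
  (fine (\int[Pm]_y (r y)%:E) * fine (\int[Pm]_y (omega (r y))%:E))%:E
   <= \int[Pm]_y (r y * omega (r y))%:E.
Proof.
set mu := fine (\int[Pm]_y (r y)%:E).
set W := fine (\int[Pm]_y (omega (r y))%:E).
set c := omega mu.
have mw : measurable_fun setT (fun y => omega (r y)) by exact: measurableT_comp.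
have iw : Pm.-integrable setT (fun y => (omega (r y))%:E).
  apply: (le_integrable measurableT _ _ (finite_measure_integrable_cst Pm 1%R measurableT)).
  - exact/measurable_EFinP.
  - move=> y _ /=; rewrite lee_fin; have /andP[h1 h2] := omega01 (r y).
    by rewrite ger0_norm// ger0_norm.
have irw : Pm.-integrable setT (fun y => (r y * omega (r y))%:E).
  apply: (le_integrable measurableT _ _ ir_m).
  - by apply/measurable_EFinP; apply: measurable_funM.
  - move=> y _ /=; rewrite lee_fin normrM; have /andP[h1 h2] := omega01 (r y).
    rewrite (ger0_norm h1); rewrite -[leRHS]mulr1; apply: ler_wpM2l => //.
have Er : \int[Pm]_y (r y)%:E = mu%:E by rewrite fineK// integrable_fin_num.
have Ew : \int[Pm]_y (omega (r y))%:E = W%:E by rewrite fineK// integrable_fin_num.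
have Erw := @fin_eq R _ (integrable_fin_num measurableT irw).
set A := fine _ in Erw.
have ic : forall k, Pm.-integrable setT (fun _ => k%:E).
  by move=> k; exact: (finite_measure_integrable_cst Pm k measurableT).
have i1 : Pm.-integrable setT (fun y => (mu * omega (r y))%:E).
  by under eq_fun do rewrite EFinM; apply: (integrableZl measurableT).
have i2 : Pm.-integrable setT (fun y => (c * r y)%:E).
  by under eq_fun do rewrite EFinM; apply: (integrableZl measurableT).
have H : \int[Pm]_y ((mu * omega (r y))%:E + (c * r y)%:E) <=
         \int[Pm]_y ((r y * omega (r y))%:E + (mu * c)%:E).
  apply: (le_integral measurableT).
  - exact: (integrableD measurableT i1 i2).
  - exact: (integrableD measurableT irw (ic _)).
  - move=> y _; rewrite -!EFinD lee_fin.
    have [h|h] := leP mu (r y).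
    + have := omega_mono _ _ h; rewrite -/c => hw; nra.
    + have := omega_mono _ _ (ltW h); rewrite -/c => hw; nra.
rewrite (integralD measurableT i1 i2) (integralD measurableT irw (ic _)) in H.
have e1 : \int[Pm]_x (mu * omega (r x))%:E = (mu * W)%:E.
  under eq_integral do rewrite EFinM.
  by rewrite (integralZl measurableT iw) Ew.
have e2 : \int[Pm]_x (c * r x)%:E = (c * mu)%:E.
  under eq_integral do rewrite EFinM.
  by rewrite (integralZl measurableT ir_m) Er.
have e3 : \int[Pm]_x (mu * c)%:E = (mu * c)%:E.
  rewrite integral_cst// -[RHS]mule1; congr (_ * _); exact: probability_setT.
rewrite e1 e2 e3 Erw in H.
rewrite Erw; move: H; rewrite -!EFinD !lee_fin => H; lra.
Qed.

Theorem proposition2 (R : realType) (d : measure_display) (Y : measurableType d)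
  (Pm PM : probability Y R) (r : Y -> R) (omega : R -> R)
  (Prsd : {measure set Y -> \bar R})
  (mr : measurable_fun setT r)
  (ir_m : Pm.-integrable setT (fun y => (r y)%:E))
  (ir_M : PM.-integrable setT (fun y => (r y)%:E))
  (momega : measurable_fun setT omega)
  (omega01 : forall x, (0 <= omega x <= 1)%R)
  (omega_mono : {homo omega : x y / (x <= y)%R})
  (HPrsd : forall B, measurable B ->
     Prsd B = \int[Pm]_(y in B) (omega (r y))%:E
              + (1 - \int[Pm]_y (omega (r y))%:E) * PM B)
  (Hexp : \int[PM]_y (r y)%:E >= \int[Pm]_y (r y)%:E) :
  \int[Prsd]_y (r y)%:E >= \int[Pm]_y (r y)%:E.
Proof.
pose w y := omega (r y).
have mw : measurable_fun setT w by exact: measurableT_comp.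
have w01 : forall y, (0 <= w y <= 1)%R by move=> y; exact: omega01.
pose Q := @densm _ _ _ Pm w mw w01.
have Ew : \int[Pm]_y (w y)%:E = (fine (\int[Pm]_y (w y)%:E))%:E.
  rewrite fineK// ge0_fin_numE; last by apply: integral_ge0 => y _; rewrite lee_fin; case/andP: (w01 y).
  have := @densm_le1 _ _ _ Pm w mw w01 setT measurableT; rewrite /densm => h.
  exact: (le_lt_trans h (ltry _)).
set W := fine _ in Ew.
have W1 : (W <= 1)%R.
  by rewrite -lee_fin -Ew; have := @densm_le1 _ _ _ Pm w mw w01 setT measurableT; rewrite /densm.
have kk : (0 <= 1 - W)%R by rewrite subr_ge0.
pose nm := measure_add Q (mscale (NngNum kk) PM).
have stepA : forall f : Y -> \bar R, (forall y, 0 <= f y) -> measurable_fun setT f ->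
    \int[Prsd]_y f y = \int[Pm]_y (f y * (w y)%:E) + (1 - W)%:E * \int[PM]_y f y.
  move=> f f0 mf.
  rewrite (eq_measure_integral nm); last first.
    move=> A mA _; rewrite HPrsd //; apply: esym.
    apply: (etrans (measure_addE _ _ _)).
    by rewrite /= -/w Ew /mscale /= EFinB.
  rewrite ge0_integral_measure_add //.
  rewrite ge0_integral_mscale //.
  by rewrite (@densm_change _ _ _ Pm w mw w01 f)...
pose f := fun y => (r y)%:E.
have mf : measurable_fun setT f by exact/measurable_EFinP.
pose F := fun y => (r y * w y)%:E.
have iF : Pm.-integrable setT F.
  apply: (le_integrable measurableT _ _ ir_m).
  - by apply/measurable_EFinP; apply: measurable_funM.
  - move=> y _ /=; rewrite lee_fin normrM; have /andP[h1 h2] := w01 y.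
    rewrite (ger0_norm h1); rewrite -[leRHS]mulr1; exact: ler_wpM2l.
have eP : forall y, f^\+ y * (w y)%:E = F^\+ y.
  move=> y; have /andP[h1 _] := w01 y.
  by rewrite !funeposE /f /F EFinM muleC maxe_pMr ?lee_fin // mule0 muleC.
have eN : forall y, f^\- y * (w y)%:E = F^\- y.
  move=> y; have /andP[h1 _] := w01 y.
  by rewrite !funenegE /f /F EFinM muleC maxe_pMr ?lee_fin // mule0 muleN muleC.
have I1 : \int[Pm]_y (f^\+ y * (w y)%:E) = \int[Pm]_y F^\+ y.
  by apply: eq_integral => y _; exact: eP.
have I2 : \int[Pm]_y (f^\- y * (w y)%:E) = \int[Pm]_y F^\- y.
  by apply: eq_integral => y _; exact: eN.
have key := @key_ineq R d Y Pm r omega mr ir_m momega omega01 omega_mono.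
rewrite -/W in key.
rewrite -/f integralE [X in X <= _]integralE.
rewrite (stepA _ (funepos_ge0 _) (measurable_funepos mf)).
rewrite (stepA _ (funeneg_ge0 _) (measurable_funeneg mf)).
rewrite I1 I2.
rewrite -/f integralE -/F [X in _ <= X]integralE in key.
rewrite -/f integralE [X in _ <= X]integralE in Hexp.
have fin : forall (mu : {measure set Y -> \bar R}) (h : Y -> \bar R),
    mu.-integrable setT h -> exists a : R, \int[mu]_y h y = a%:E.
  by move=> mu h ih; exists (fine (\int[mu]_y h y)); rewrite fineK// integrable_fin_num.
have [ap Hap] := fin _ _ (integrable_funepos measurableT iF).
have [an Han] := fin _ _ (integrable_funeneg measurableT iF).
have [bp Hbp] := fin _ _ (integrable_funepos measurableT ir_M).
have [bn Hbn] := fin _ _ (integrable_funeneg measurableT ir_M).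
have [cp Hcp] := fin _ _ (integrable_funepos measurableT ir_m).
have [cn Hcn] := fin _ _ (integrable_funeneg measurableT ir_m).
rewrite -/f in Hbp Hbn Hcp Hcn.
rewrite Hbp Hbn Hcp Hcn in Hexp *.
rewrite -/F Hcp Hcn Hap Han in key.
rewrite Hap Han.
move: key Hexp; rewrite -!EFinN -!EFinM -!EFinD !lee_fin /= => key Hexp.
have Hk : (0 <= (1 - W) * (bp - bn - (cp - cn)))%R.
  apply: mulr_ge0 => //; lra.
nra.
Qed.
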